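(* Let $\mathbf K$ be a commutative field, $p\in\mathbb N$, and $\alpha:\mathcal M_p\to\mathbf K$. Then $\alpha$ is an automatic function (with input alphabet $\{0,\dots,p-1\}$ and output alphabet $\mathbf K$) if and only if $\alpha\in\mathrm{Rec}_p(\mathbf K)$ and the shift-monoid of $\alpha$ is finite.
   Context: $\mathcal M_p$ is the free monoid of words over $\{0,\dots,p-1\}$. For $A:\mathcal M_p\to\mathbf K$ and $S\in\mathcal M_p$, $(\rho(S)A)[U]=A[US]$. $\mathrm{Rec}_p(\mathbf K)$ is the set of $A$ whose span $\overline{A}^{rec}$ of $\{\rho(S)A:S\in\mathcal M_p\}$ is finite-dimensional, and the shift-monoid of $A$ is the set of restrictions of the maps $\rho(S)$ to $\overline{A}^{rec}$. An initial automaton with input alphabet $X$ and output alphabet $Y$ consists of a set $\mathcal V$ of states, an initial state $v_*\in\mathcal V$, a transition function $\delta:\mathcal V\times X\to\mathcal V$ and an output function $w:\mathcal V\to Y$; it defines $\alpha:\mathcal M_X\to Y$ by $\alpha(x_1\dots x_n)=w(v)$ where $v$ is reached from $v_*$ by successively applying $\delta(\cdot,x_1),\dots,\delta(\cdot,x_n)$. It is finite-state if $X$ and $\mathcal V$ are finite. A function $\mathcal M_X\to Y$ is automatic if it is defined by some finite-state initial automaton. *)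

(* Defs.v *)
From mathcomp Require Import all_boot all_order all_algebra.
Set Implicit Arguments. Unset Strict Implicit. Unset Printing Implicit Defensive.
Import GRing.Theory.
Local Open Scope ring_scope.

Definition word (p : nat) := seq 'I_p.

Definition rho {p : nat} {K : Type} (S : word p) (A : word p -> K) : word p -> K :=
  fun U => A (U ++ S).

Definition in_rec_span {p : nat} {K : fieldType} (A : word p -> K) (f : word p -> K) : Prop :=
  exists (n : nat) (Ts : 'I_n -> word p) (c : 'I_n -> K),
    forall U, f U = \sum_(i < n) c i * rho (Ts i) A U.

(* The span of { rho(S) A } is finite-dimensional: it is contained in the span
   of finitely many functions. *)
Definition in_Rec {p : nat} {K : fieldType} (A : word p -> K) : Prop :=
  exists (n : nat) (B : 'I_n -> (word p -> K)),
    forall f, in_rec_span A f ->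
      exists c : 'I_n -> K, forall U, f U = \sum_(i < n) c i * B i U.

(* The shift-monoid of A (restrictions of the rho(S) to the span) is finite:
   finitely many words represent every restriction. *)
Definition shift_monoid_finite {p : nat} {K : fieldType} (A : word p -> K) : Prop :=
  exists Ss : seq (word p), forall S : word p,
    exists2 S', S' \in Ss &
      forall f, in_rec_span A f -> forall U, rho S f U = rho S' f U.

Definition automatic {p : nat} {Y : Type} (alpha : word p -> Y) : Prop :=
  exists (V : finType) (v0 : V) (delta : V -> 'I_p -> V) (w : V -> Y),
    forall u : word p, alpha u = w (foldl delta v0 u).

(* Main.v *)
Require Import Defs.
From mathcomp Require Import all_boot all_order all_algebra.
From Stdlib Require Import Classical ClassicalEpsilon.
Import GRing.Theory.
Local Open Scope ring_scope.

Lemma finite_reps (X : eqType) (F : eqType) (h : X -> F) (l : seq F) :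
  exists s : seq X, forall x, h x \in l -> exists2 x', x' \in s & h x' = h x.
Proof.
elim: l => [|y l [s Hs]]; first by exists [::].
destruct (classic (exists x0, h x0 = y)) as [[x0 Hx0]|Hn].
- exists (x0 :: s) => x; rewrite in_cons => /orP [/eqP E|/Hs [x' H1 H2]].
  + by exists x0; rewrite ?in_cons ?eqxx // Hx0 E.
  + by exists x'; rewrite // in_cons H1 orbT.
- exists s => x; rewrite in_cons => /orP [/eqP E|/Hs //].
  by exfalso; apply: Hn; exists x.
Qed.

Lemma span_rho (K : fieldType) p (alpha : word p -> K) S f :
  in_rec_span alpha f -> in_rec_span alpha (rho S f).
Proof.
move=> [n [Ts [c Hf]]]; exists n, (fun i => S ++ Ts i), c => U.
by rewrite /rho Hf; apply: eq_bigr => i _; rewrite /rho catA.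
Qed.

Theorem mainTheorem17 (K : fieldType) (p : nat) (alpha : word p -> K) :
  automatic alpha <-> (in_Rec alpha /\ shift_monoid_finite alpha).
Proof.
split.
- move=> [V [v0 [delta [w Ha]]]].
  set st := fun u : word p => foldl delta v0 u.
  have Hr : forall U S, alpha (U ++ S) = w (foldl delta (st U) S).
    by move=> U S; rewrite Ha foldl_cat.
  split.
  + exists #|V|, (fun j U => if st U == enum_val j then 1 else 0).
    move=> f [n [Ts [c Hf]]].
    exists (fun j => \sum_(i < n) c i * w (foldl delta (enum_val j) (Ts i))) => U.
    rewrite (bigD1 (enum_rank (st U))) //= enum_rankK eqxx mulr1.
    rewrite [X in _ + X]big1 ?addr0.
      by rewrite Hf; apply: eq_bigr => i _; rewrite /rho Hr.
    move=> j Hj; case: (st U =P enum_val j); last by rewrite mulr0.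
    by move=> E; move: Hj; rewrite E enum_valK eqxx.
  + have [s Hs] := finite_reps (seq 'I_p : eqType) {ffun V -> V} (fun S : seq 'I_p => [ffun v => foldl delta v S]) (enum {ffun V -> V}).
    exists s => S; have [S' H1 H2] := Hs S (mem_enum _ _).
    exists S' => // f [n [Ts [c Hf]]] U.
    rewrite /rho !Hf; apply: eq_bigr => i _; rewrite /rho -!catA !Hr !foldl_cat.
    by have := congr1 (fun g : {ffun V -> V} => g (st U)) H2; rewrite !ffunE => ->.
- move=> [_ [Ss HS]].
  set eqv := fun S T : word p => forall f, in_rec_span alpha f -> forall U, rho S f U = rho T f U.
  have Hex : forall S, exists i : 'I_(size Ss), eqv S (nth [::] Ss i).
    move=> S; have [S' H1 H2] := HS S.
    by exists (Ordinal ((etrans (index_mem _ _) H1))) => /=; rewrite nth_index.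
  pose r := fun S => proj1_sig (constructive_indefinite_description _ (Hex S)).
  have Hr : forall S, eqv S (nth [::] Ss (r S)).
    by move=> S; rewrite /r; case: constructive_indefinite_description.
  exists ('I_(size Ss) : finType), (r [::]),
    (fun (i : 'I_(size Ss)) (x : 'I_p) => r (nth [::] Ss i ++ [:: x])), (fun i : 'I_(size Ss) => alpha (nth [::] Ss i)).
  have Hinv : forall u, eqv u (nth [::] Ss (foldl (fun (i : 'I_(size Ss)) (x : 'I_p) => r (nth [::] Ss i ++ [:: x])) (r [::]) u)).
    elim/last_ind => [|u x IH]; first exact: Hr.
    rewrite foldl_rcons => f Hf U.
    rewrite -(Hr _ f Hf U).
    have E : forall T, rho (T ++ [:: x]) f U = rho T (rho [:: x] f) U.
      by move=> T; rewrite /rho catA.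
    by rewrite -cats1 !E IH //; apply: span_rho.
  move=> u.
  have Hsp : in_rec_span alpha alpha.
    by exists 1%N, (fun _ => [::]), (fun _ => 1) => U; rewrite big_ord1 mul1r /rho cats0.
  by have := Hinv u alpha Hsp [::]; rewrite /rho /=.
Qed.
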